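(* Let $A\subset\mathbf{Z}_{\geq 0}$ be finite with $0\in A$, $N=\#A\geq 2$, $A(x)=\sum_{a\in A}x^a$, and suppose $A(x)$ satisfies (T1) and (T2). Let $B$ be the set of all real numbers of the form $\sum_{s\in S_A}\frac{k_s}{s}$, where for each $s=p^\beta\in S_A$ ($p$ prime) the integer $k_s$ ranges over $\{0,1,\dots,p-1\}$. Then $\#B=N$ and $A(e^{2\pi i(b-b')})=0$ for all $b,b'\in B$ with $b\neq b'$.
   Context: $\Phi_s(x)$ denotes the $s$-th cyclotomic polynomial. $S_A$ is the set of prime powers $s$ such that $\Phi_s(x)$ divides $A(x)$. Condition (T1): $A(1)=\prod_{s\in S_A}\Phi_s(1)$. Condition (T2): if $s_1,\dots,s_k\in S_A$ are powers of pairwise distinct primes, then $\Phi_{s_1\cdots s_k}(x)$ divides $A(x)$. *)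

(* Defs.v *)
From HB Require Import structures.
From mathcomp Require Import all_boot all_order all_algebra all_field.
From mathcomp Require Import reals trigo.
From mathcomp Require Import complex.
Set Implicit Arguments. Unset Strict Implicit. Unset Printing Implicit Defensive.
Import Order.TTheory GRing.Theory Num.Theory.
Local Open Scope ring_scope.

Definition prime_power (s : nat) : Prop :=
  exists p beta : nat, [/\ prime p, (0 < beta)%N & s = (p ^ beta)%N].

Definition polyA (A : seq nat) : {poly int} := \sum_(a <- A) 'X^a.

Definition expi (R : realType) (theta : R) : R[i] :=
  Complex (cos theta) (sin theta).

Definition inB (R : realType) (SA : seq nat) (b : R) : Prop :=
  exists k : nat -> nat,
    (forall s, s \in SA -> (k s < pdiv s)%N) /\
    b = \sum_(s <- SA) (k s)%:R / s%:R.

(* Main.v *)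
Require Import Defs.
From HB Require Import structures.
From mathcomp Require Import all_boot all_order all_algebra all_field.
From mathcomp Require Import reals trigo.
From mathcomp Require Import complex.
From mathcomp Require Import ring lra zify.
Import Order.TTheory GRing.Theory Num.Theory.
Local Open Scope ring_scope.

Section Trig.
Variable R : realType.

Lemma expiD (x y : R) : expi (x + y) = expi x * expi y.
Proof. rewrite /expi cosD sinD /=. by rewrite [RHS]/GRing.mul /= (addrC (sin x * _)). Qed.

Lemma expi0 : expi (0 : R) = 1.
Proof. by rewrite /expi cos0 sin0. Qed.

Lemma expiX (x : R) n : expi x ^+ n = expi (x *+ n).
Proof. elim: n => [|n IH]; first by rewrite expr0 mulr0n expi0.
by rewrite exprS IH mulrS expiD. Qed.

Lemma cos2pin (k : nat) : cos ((pi *+ 2) *+ k) = 1 :> R.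
Proof. by have := periodicn (@cosD2pi R) k 0; rewrite add0r cos0. Qed.
Lemma sin2pin (k : nat) : sin ((pi *+ 2) *+ k) = 0 :> R.
Proof. by have := periodicn (@sinD2pi R) k 0; rewrite add0r sin0. Qed.

Lemma cos_sin_int (n : int) : cos (2 * pi * n%:~R) = 1 :> R /\ sin (2 * pi * n%:~R) = 0 :> R.
Proof.
case: n => k.
  have -> : 2 * pi * (Posz k)%:~R = (pi *+ 2) *+ k :> R.
    by rewrite -[(Posz k)%:~R]/(k%:R) mulr_natr mulr_natl.
  by rewrite cos2pin sin2pin.
have -> : 2 * pi * (Negz k)%:~R = - ((pi *+ 2) *+ k.+1) :> R.
  by rewrite NegzE intrN -[(Posz k.+1)%:~R]/(k.+1%:R) mulrN mulr_natr mulr_natl.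
by rewrite cosN sinN cos2pin sin2pin oppr0.
Qed.

Lemma expi_int (n : int) : expi (2 * pi * n%:~R) = 1 :> R[i].
Proof. by have [c s] := cos_sin_int n; rewrite /expi c s. Qed.

Lemma expi_eq1 (y : R) : expi (2 * pi * y) = 1 -> exists n : int, y = n%:~R.
Proof.
move=> E.
have [cy sy] : cos (2 * pi * y) = 1 /\ sin (2 * pi * y) = 0 by case: E.
exists (Num.floor y).
set f := Num.floor y.
have /andP[h1 h2] := floor_itv y; rewrite -/f intrD in h2.
set r := y - f%:~R.
have r0 : 0 <= r by rewrite subr_ge0.
have r1 : r < 1 by rewrite ltrBlDl.
have [cf sf] := cos_sin_int f.
have ct : cos (2 * pi * r) = 1.
  by rewrite /r mulrBr cosB cy sy cf sf mulr1 mulr0 addr0.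
have pi0 := @pi_gt0 R.
suff : r = 0 by rewrite /r => /eqP; rewrite subr_eq0 => /eqP.
have [tle|tgt] := lerP (2 * pi * r) pi.
  have : 2 * pi * r = 0.
    apply: cos_inj; rewrite ?cos0 //; rewrite in_itv /=; apply/andP; split => //; try nra.
  move/eqP; rewrite mulf_eq0 => /orP[|/eqP//]; rewrite mulf_eq0 => /orP[] /eqP; lra.
have : pi *+ 2 - 2 * pi * r = 0.
  apply: cos_inj; rewrite ?cos0 //.
  - rewrite in_itv /= mulr2n; apply/andP; split; nra.
  - rewrite in_itv /=; lra.
  - by rewrite addrC cosD2pi cosN.
rewrite mulr2n; nra.
Qed.

Lemma prim_expi (m : nat) (C : int) : (0 < m)%N -> coprime m `|C|%N ->
  m.-primitive_root (expi (2 * pi * (C%:~R / m%:R)) : R[i]).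
Proof.
move=> m0 cop.
have mR : m%:R != 0 :> R by rewrite pnatr_eq0 -lt0n.
have key j : (expi (2 * pi * (C%:~R / m%:R)) ^+ j == 1 :> R[i]) = (m %| j)%N.
  rewrite expiX -mulrnAr -mulrnAr.
  apply/eqP/idP.
    move/expi_eq1 => [n Hn0].
    have /intr_inj Hn : (C * j%:Z)%:~R = (n * m%:Z)%:~R :> R.
      rewrite !intrM -Hn0 -[((Posz j)%:~R : R)]/(j%:R) -[((Posz m)%:~R : R)]/(m%:R).
      by rewrite -mulr_natr; field.
    have : (m%:Z %| C * j)%Z by apply/dvdzP; exists n; rewrite -Hn.
    by rewrite Gauss_dvdzr.
  move=> /dvdnP [q ->].
  have -> : C%:~R * (m%:R^-1 *+ (q * m)) = (C * q)%:~R :> R.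
    rewrite intrM -[((Posz q)%:~R : R)]/(q%:R) -[_ *+ (q * m)]mulr_natr natrM; field; by rewrite pnatr_eq0 -lt0n.
  exact: (expi_int (C * q)).
rewrite /primitive_root_of_unity m0 /=; apply/forallP => i.
rewrite unity_rootE key; apply/eqP.
case: (eqVneq i.+1 m) => [->|ne]; first by rewrite dvdnn.
apply/negbTE; apply: contra ne => /(dvdn_leq (ltn0Sn _)) le.
by rewrite eqn_leq le (ltn_ord i).
Qed.
End Trig.

Lemma divisors_pS p k : prime p ->
  perm_eq (divisors (p ^ k.+1)) (p ^ k.+1 :: divisors (p ^ k))%N.
Proof.
move=> pp; have p1 := prime_gt1 pp; have p0 := prime_gt0 pp.
apply: uniq_perm; first exact: divisors_uniq.
  rewrite /= divisors_uniq andbT -dvdn_divisors ?expn_gt0 ?p0 //.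
  have pk0 : (0 < p ^ k)%N by rewrite expn_gt0 p0.
  apply/negP => /(dvdn_leq pk0).
  by rewrite leq_exp2l // ltnn.
move=> d; rewrite inE -!dvdn_divisors ?expn_gt0 ?p0 //.
apply/idP/idP.
  case/(dvdn_pfactor _ _ pp) => i; rewrite leq_eqVlt => /orP[/eqP->|lt] ->.
    by rewrite eqxx.
  by rewrite dvdn_exp2l ?orbT // -ltnS.
case/orP => [/eqP->//|]; move/dvdn_trans; apply.
by rewrite dvdn_exp2l.
Qed.

Lemma Phi_pp1 p k : prime p -> ('Phi_(p ^ k.+1)%N).[1] = p%:Z.
Proof.
move=> pp; have p0 := prime_gt0 pp.
set Y : {poly int} := 'X^(p ^ k) - 1.
have Y0 : Y != 0 by rewrite monic_neq0 // monicXnsubC // expn_gt0 p0.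
have E1 : 'Phi_(p ^ k.+1)%N * Y = 'X^(p ^ k.+1) - 1.
  rewrite -prod_Cyclotomic ?expn_gt0 ?p0 // (perm_big _ (@divisors_pS p k pp)).
  by rewrite big_cons prod_Cyclotomic // expn_gt0 p0.
have E2 : 'X^(p ^ k.+1) - 1 = (\sum_(i < p) 'X^(p ^ k) ^+ i) * Y.
  by rewrite expnSr exprM subrX1 mulrC.
have E : 'Phi_(p ^ k.+1)%N = \sum_(i < p) 'X^(p ^ k) ^+ i.
  by apply: (mulIf Y0); rewrite E1 E2.
rewrite E horner_sum; under eq_bigr do rewrite horner_exp.
under eq_bigr do rewrite hornerXn !expr1n.
by rewrite sumr_const card_ord natz.
Qed.

Lemma mapXn1 (F : fieldType) n : map_poly (intr : int -> F) ('X^n - 1) = 'X^n - 1.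
Proof. by rewrite rmorphB /= rmorph1 map_polyXn. Qed.

Lemma Phi_root (F : fieldType) (m : nat) (z : F) :
  m.-primitive_root z -> (map_poly (intr : int -> F) 'Phi_m).[z] = 0.
Proof.
move=> pz; have m0 := prim_order_gt0 pz.
have : ((map_poly (intr : int -> F) ('X^m - 1)).[z] == 0).
  by rewrite mapXn1 !hornerE (prim_expr_order pz) subrr.
rewrite -prod_Cyclotomic // rmorph_prod /= horner_prod prodf_seq_eq0.
case/hasP => d dd /= /eqP Hd.
have dm : (d %| m)%N by rewrite dvdn_divisors.
have d0 : (0 < d)%N := dvdn_gt0 m0 dm.
have : ((map_poly (intr : int -> F) ('X^d - 1)).[z] == 0).
  rewrite -prod_Cyclotomic // (big_rem d) ?divisors_id //.
  by rewrite rmorphM hornerM /= Hd mul0r.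
rewrite mapXn1 !hornerE subr_eq0 -(prim_order_dvd pz) => md.
suff -> : m = d by [].
by apply/eqP; rewrite eqn_dvd md dm.
Qed.

Lemma ndvdzD (d a b : int) : (d %| a)%Z -> ~~ (d %| b)%Z -> ~~ (d %| a + b)%Z.
Proof. by move=> h; rewrite rpredDl. Qed.

Lemma ndvdzM (q : nat) (a b : int) : prime q ->
  ~~ (q%:Z %| a)%Z -> ~~ (q%:Z %| b)%Z -> ~~ (q%:Z %| a * b)%Z.
Proof. by move=> pq ha hb; rewrite dvdzE abszM Euclid_dvdM // negb_or ha hb. Qed.

Lemma prime_ndvd_pow (q p k : nat) : prime q -> prime p -> q != p -> ~~ (q %| p ^ k)%N.
Proof.
move=> pq pp ne; rewrite Euclid_dvdX // dvdn_prime2 //.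
by rewrite (negbTE ne).
Qed.

Lemma intr_natE (R : pzRingType) (n : nat) : (n%:Z)%:~R = n%:R :> R.
Proof. by []. Qed.

Section Core.
Variable R : numFieldType.

Lemma core (P : seq nat) (S : seq nat) (e : nat -> int) :
  uniq P -> all prime P -> uniq S ->
  (forall s, s \in S -> exists2 p, p \in P & exists b, s = (p ^ b.+1)%N) ->
  (forall s, s \in S -> (`|e s| < pdiv s)%N) ->
  exists g : nat -> nat, exists C : int,
   [/\ forall p, p \in P -> (0 < g p)%N -> (p ^ g p)%N \in S,
       forall p, p \in P -> (0 < g p)%N -> ~~ (p%:Z %| C)%Z,
       (has (fun s => e s != 0) S -> has (fun p => 0 < g p)%N P) &
       \sum_(s <- S) (e s)%:~R / s%:R = C%:~R / (\prod_(p <- P) p ^ g p)%N%:R :> R].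
Proof.
move=> uP aP; elim: S => [|s S IH] /= uS hS he.
  exists (fun _ => 0%N), 0; split => //.
  by rewrite big_nil mul0r.
case/andP: uS => sS uS.
have [g [C [g1 g2 g3 g4]]] := IH uS (fun t h => hS t ltac:(by rewrite inE h orbT))
   (fun t h => he t ltac:(by rewrite inE h orbT)).
have [p pP [b sdef]] := hS s (mem_head _ _).
have pp : prime p by move/allP: aP; apply.
have p0 := prime_gt0 pp.
have pdivs : pdiv s = p by rewrite sdef pdiv_pfactor.
have es := he s (mem_head _ _); rewrite pdivs in es.
set m0 := (\prod_(q <- P | q != p) q ^ g q)%N.
have m0pos : (0 < m0)%N.
  rewrite /m0 big_seq_cond; apply: prodn_cond_gt0 => q /andP[qP _].
  by rewrite expn_gt0 prime_gt0 //; apply: (allP aP).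
have mdef : (\prod_(q <- P) q ^ g q)%N = (p ^ g p * m0)%N := bigD1_seq _ pP uP.
have pm0 : ~~ (p %| m0)%N.
  rewrite /m0 Euclid_dvd_prod // big_has_cond; apply/hasPn => q qP /=; apply/negP => /andP[qp].
  rewrite Euclid_dvdX // dvdn_prime2 //; last by apply: (allP aP).
  by case/andP => /eqP pq _; rewrite pq eqxx in qp.
have qm0 q : q \in P -> q != p -> (0 < g q)%N -> (q %| m0)%N.
  move=> qP qp gq; rewrite /m0 -big_filter (bigD1_seq q) /=.
  - by apply: dvdn_mulr; apply: dvdn_exp.
  - by rewrite mem_filter qp.
  - exact: filter_uniq.
have pR : p%:R != 0 :> R by rewrite pnatr_eq0 -lt0n.
have m0R : m0%:R != 0 :> R by rewrite pnatr_eq0 -lt0n.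
have [es0|esn0] := eqVneq (e s) 0.
  exists g, C; split.
  - by move=> q qP gq; rewrite inE g1 ?orbT.
  - exact: g2.
  - exact: g3.
  - by rewrite big_cons g4 es0 mul0r add0r.
have pe : ~~ (p%:Z %| e s)%Z.
  rewrite dvdzE /=; apply/negP => /(dvdn_leq); rewrite absz_gt0 esn0 => /(_ isT).
  by rewrite leqNgt es.
have [lt|gt|eq] := ltngtP b.+1 (g p).
- exists g, (C + e s * (p ^ (g p - b.+1) * m0)%N%:Z); split.
  + by move=> q qP gq; rewrite inE g1 ?orbT.
  + move=> q qP gq; rewrite addrC; apply: ndvdzD; last exact: g2.
    apply: dvdz_mull; rewrite dvdzE /=.
    have [/eqP->|qp] := boolP (q == p).
      by apply: dvdn_mulr; apply: dvdn_exp; rewrite ?subn_gt0.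
    by apply: dvdn_mull; apply: qm0.
  + by move=> _; apply/hasP; exists p => //; apply: leq_trans lt.
  + rewrite big_cons g4 mdef.
    have -> : (p ^ g p = p ^ b.+1 * p ^ (g p - b.+1))%N by rewrite -expnD subnKC // ltnW.
    rewrite sdef intrD intrM !intr_natE !natrM !natrX; field.
    by rewrite m0R !expf_neq0.
- pose g' := fun q => if q == p then b.+1 else g q.
  exists g', (C * (p ^ (b.+1 - g p))%N%:Z + e s * m0%:Z); split.
  + move=> q qP; rewrite /g'; case: eqP => [->|_] gq.
      by rewrite -sdef mem_head.
    by rewrite inE g1 ?orbT.
  + move=> q qP; rewrite /g'; case: eqP => [->|/eqP qp] gq.
      apply: ndvdzD; first by apply: dvdz_mull; rewrite dvdzE /=; apply: dvdn_exp; rewrite ?subn_gt0.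
      exact: ndvdzM.
    rewrite addrC; apply: ndvdzD; first by apply: dvdz_mull; rewrite dvdzE /=; apply: qm0.
    apply: ndvdzM; [exact: (allP aP) | exact: g2 | ].
    by rewrite dvdzE /=; apply: prime_ndvd_pow => //; apply: (allP aP).
  + by move=> _; apply/hasP; exists p => //; rewrite /g' eqxx.
  + have mdef' : (\prod_(q <- P) q ^ g' q)%N = (p ^ b.+1 * m0)%N.
      rewrite (bigD1_seq p) //= /g' eqxx; congr (_ * _)%N.
      by apply: eq_bigr => q /negbTE ->.
    rewrite big_cons g4 mdef mdef' sdef.
    have -> : (p ^ b.+1 = p ^ g p * p ^ (b.+1 - g p))%N by rewrite -expnD subnKC // ltnW.
    rewrite intrD !intrM !intr_natE !natrM !natrX; field.
    by rewrite m0R !expf_neq0.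
- exfalso; have := g1 p pP; rewrite -eq => /(_ isT); rewrite -sdef.
  by rewrite (negbTE sS).
Qed.
End Core.

Fixpoint digs (S : seq nat) : seq (seq nat) :=
  match S with
  | [::] => [:: [::]]
  | s :: S' => [seq i :: l | i <- iota 0 (pdiv s), l <- digs S']
  end.

Lemma size_digs S : size (digs S) = (\prod_(s <- S) pdiv s)%N.
Proof. elim: S => [|s S IH] /=; first by rewrite big_nil.
by rewrite size_allpairs size_iota IH big_cons. Qed.

Lemma uniq_digs S : uniq (digs S).
Proof.
elim: S => [|s S IH] //=; apply: allpairs_uniq => //; first exact: iota_uniq.
by move=> [a l] [a' l'] _ _ /= [-> ->].
Qed.

Lemma mem_digs S l : (l \in digs S) = all2 (fun d s => (d < pdiv s)%N) l S.
Proof.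
elim: S l => [|s S IH] [|d l] //=.
  apply/negP => /allpairsP [[x y] [_ _]] //.
apply/allpairsP/andP => [[[x y] [/= hx hy [-> ->]]]|[hd hl]].
  by rewrite mem_iota in hx; rewrite -IH.
by exists (d, l); rewrite /= mem_iota IH.
Qed.

Lemma all2_nth (r : nat -> nat -> bool) l S i : all2 r l S -> (i < size S)%N ->
  r (nth 0%N l i) (nth 0%N S i).
Proof.
elim: S l i => [|s S IH] [|d l] [|i] //=; first by case/andP.
by case/andP => _ h; apply: IH.
Qed.

Lemma all2_size (r : nat -> nat -> bool) l S : all2 r l S -> size l = size S.
Proof. by elim: S l => [|s S IH] [|d l] //= /andP[_ /IH ->]. Qed.

Lemma all2_map (k : nat -> nat) S : (forall s, s \in S -> (k s < pdiv s)%N) ->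
  all2 (fun d s => (d < pdiv s)%N) (map k S) S.
Proof.
elim: S => [|s S IH] //= h; rewrite h ?mem_head // IH // => t ht.
by apply: h; rewrite inE ht orbT.
Qed.


Lemma key (R : numFieldType) (SA : seq nat) (k k' : nat -> nat) :
  uniq SA -> (forall s, s \in SA -> exists p b, prime p /\ s = (p ^ b.+1)%N) ->
  (forall s, s \in SA -> (k s < pdiv s)%N) -> (forall s, s \in SA -> (k' s < pdiv s)%N) ->
  (exists2 s, s \in SA & k s != k' s) ->
  exists T : seq nat, exists C : int,
   [/\ T != [::], {subset T <= SA}, uniq [seq pdiv t | t <- T],
      coprime (\prod_(t <- T) t) `|C| &
      (C != 0) /\ (0 < \prod_(t <- T) t)%N /\
      \sum_(s <- SA) (k s)%:R / s%:R - \sum_(s <- SA) (k' s)%:R / s%:R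
        = C%:~R / (\prod_(t <- T) t)%N%:R :> R].
Proof.
move=> uSA hp hk hk' [s0 s0S ne0].
set P := undup [seq pdiv s | s <- SA].
have uP : uniq P := undup_uniq _.
have aP : all prime P.
  apply/allP => p; rewrite mem_undup => /mapP [s sS ->].
  by have [q [b [pq ->]]] := hp s sS; rewrite pdiv_pfactor.
have hS : forall s, s \in SA -> exists2 p, p \in P & exists b, s = (p ^ b.+1)%N.
  move=> s sS; have [q [b [pq sd]]] := hp s sS.
  exists q; last by exists b.
  by rewrite mem_undup; apply/mapP; exists s => //; rewrite sd pdiv_pfactor.
pose e s := (k s)%:Z - (k' s)%:Z.
have he : forall s, s \in SA -> (`|e s| < pdiv s)%N.
  move=> s sS; have := hk s sS; have := hk' s sS; rewrite /e; lia.
have [g [C [g1 g2 g3 g4]]] := @core R P SA e uP aP uSA hS he.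
have hasg : has (fun p => 0 < g p)%N P.
  apply: g3; apply/hasP; exists s0 => //; rewrite /e subr_eq0.
  by apply: contra ne0 => /eqP [->].
set T := [seq p ^ g p | p <- P & (0 < g p)%N]%N.
have prodT : (\prod_(t <- T) t = \prod_(p <- P) p ^ g p)%N.
  rewrite big_map big_filter big_mkcond /=; apply: eq_bigr => p _.
  by case: ifP => // /negbT; rewrite -leqNgt leqn0 => /eqP ->; rewrite expn0.
have [p0 p0P gp0] := hasP hasg.
exists T, C; split.
- apply/eqP => T0; have : (p0 ^ g p0)%N \in T.
    by apply: map_f; rewrite mem_filter gp0 p0P.
  by rewrite T0 in_nil.
- by move=> t /mapP [p]; rewrite mem_filter => /andP [gp pP] ->; apply: g1.
- have -> : [seq pdiv t | t <- T] = [seq p <- P | (0 < g p)%N].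
    rewrite -map_comp -[RHS]map_id; apply/eq_in_map => p.
    rewrite mem_filter => /andP [gp pP] /=.
    by rewrite -(prednK gp) pdiv_pfactor //; apply: (allP aP).
  exact: filter_uniq.
- rewrite prodT big_seq; elim/big_ind: _ => [|x y hx hy|p pP].
  + exact: coprime1n.
  + by rewrite coprimeMl hx hy.
  + have [gp|] := posnP (g p); first by rewrite gp expn0 coprime1n.
    move=> gp; apply: coprimeXl; rewrite prime_coprime; last exact: (allP aP).
    exact: g2.
split.
  by apply/eqP => C0; move: (g2 p0 p0P gp0); rewrite C0 dvdz0.
split.
  rewrite prodT big_seq_cond; apply: prodn_cond_gt0 => p /andP[pP _].
  by rewrite expn_gt0 prime_gt0 //; apply: (allP aP).
rewrite prodT -g4 -sumrB; apply: eq_bigr => s _.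
by rewrite /e intrB !intr_natE mulrBl.
Qed.


Theorem mainTheorem2 (R : realType) (A : seq nat) (SA : seq nat) :
  uniq A -> (0 \in A)%N -> (2 <= size A)%N ->
  (* SA enumerates (without repetition) the set S_A *)
  uniq SA ->
  (forall s : nat, s \in SA <-> (prime_power s /\ 'Phi_s %| polyA A)) ->
  (* (T1) *)
  (polyA A).[1] = \prod_(s <- SA) ('Phi_s).[1] ->
  (* (T2) *)
  (forall T : seq nat, T != [::] -> {subset T <= SA} ->
     uniq [seq pdiv s | s <- T] -> 'Phi_(\prod_(s <- T) s)%N %| polyA A) ->
  (exists Bs : seq R, [/\ uniq Bs, size Bs = size A &
                          forall b : R, b \in Bs <-> inB SA b]) /\
  (forall b b' : R, inB SA b -> inB SA b' -> b != b' ->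
     (map_poly (intr : int -> R[i]) (polyA A)).[expi (2 * pi * (b - b'))] = 0).
Proof.
move=> uA A0 A2 uSA hSA hT1 hT2.
have hp : forall s, s \in SA -> exists p b, prime p /\ s = (p ^ b.+1)%N.
  move=> s sS; have [[p [be [pp be0 ->]]] _] := (hSA s).1 sS.
  by exists p, be.-1; rewrite prednK.
pose val (k : nat -> nat) : R := \sum_(s <- SA) (k s)%:R / s%:R.
pose kof (l : seq nat) s := nth 0%N l (index s SA).
pose Bs := [seq val (kof l) | l <- digs SA].
have kof_lt : forall l, l \in digs SA -> forall s, s \in SA -> (kof l s < pdiv s)%N.
  move=> l; rewrite mem_digs => h s sS.
  have iS : (index s SA < size SA)%N by rewrite index_mem.
  by have := all2_nth _ _ _ _ h iS; rewrite nth_index.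
split.
  exists Bs; split.
  - rewrite map_inj_in_uniq ?uniq_digs // => l l' hl hl' E.
    apply: contraTeq isT => ne.
    have [s sS ns] : exists2 s, s \in SA & kof l s != kof l' s.
      case: (boolP (all (fun s => kof l s == kof l' s) SA)) => [/allP h|/allPn [s sS ns]].
        case/negP: ne; apply/eqP; apply: (@eq_from_nth _ 0%N).
          rewrite mem_digs in hl; rewrite mem_digs in hl'.
          by rewrite (all2_size _ _ _ hl) (all2_size _ _ _ hl').
        move=> i; rewrite mem_digs in hl; rewrite (all2_size _ _ _ hl) => iS.
        have := h (nth 0%N SA i) (mem_nth _ iS); rewrite /kof index_uniq //.
        by move/eqP.
      by exists s.
    have [T [C [_ _ _ _ [C0 [m0 EE]]]]] := @key R SA _ _ uSA hp (kof_lt l hl) (kof_lt l' hl') (ex_intro2 _ _ s sS ns).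
    move: EE; rewrite -/(val _) -/(val _) E subrr => /esym /eqP.
    rewrite mulf_eq0 invr_eq0 intr_eq0 (negbTE C0) /= pnatr_eq0 => /eqP T0.
    by rewrite T0 in m0.
  - rewrite size_map size_digs.
    have h1 : (polyA A).[1] = (size A)%:Z.
      rewrite /polyA horner_sum; elim: (A) => [|a A' IH]; rewrite ?big_nil ?big_cons //=.
      by rewrite hornerXn expr1n IH -add1n PoszD.
    have h2 : \prod_(s <- SA) ('Phi_s).[1] = (\prod_(s <- SA) pdiv s)%N%:Z.
      rewrite -[RHS]intz prodMz; apply: eq_big_seq => s sS.
      have [p [b [pp ->]]] := hp s sS; by rewrite Phi_pp1 // pdiv_pfactor // intz.
    by have := hT1; rewrite h1 h2 => -[->].
  - move=> b; split.
      case/mapP => l hl ->; exists (kof l); split => //; exact: kof_lt.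
    case=> k [hk ->]; apply/mapP; exists (map k SA); first by rewrite mem_digs all2_map.
    rewrite /val; apply: eq_big_seq => s sS.
    by rewrite /kof (nth_map 0%N) ?index_mem // nth_index.
move=> b b' [k [hk ->]] [k' [hk' ->]] ne.
have [s sS ns] : exists2 s, s \in SA & k s != k' s.
  case: (boolP (all (fun s => k s == k' s) SA)) => [/allP h|/allPn [s sS ns]]; last by exists s.
  case/negP: ne; apply/eqP; apply: eq_big_seq => s sS; by rewrite (eqP (h s sS)).
have [T [C [Tn TS Tu cop [_ [m0 EE]]]]] := @key R SA _ _ uSA hp hk hk' (ex_intro2 _ _ s sS ns).
rewrite EE.
have pz := @prim_expi R _ _ m0 cop.
have /(Pdiv.IdomainMonic.dvdpP (Cyclotomic_monic _)) [q ->] := hT2 T Tn TS Tu.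
by rewrite rmorphM /= hornerM Phi_root // mulr0.
Qed.
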